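(* There exists a constant $L>0$ depending only on $\eta$ such that the following holds. Let $\gamma=(\gamma_1,\dots,\gamma_N)$ with $\gamma_i\in[0,p_i]$ for all $i$, and suppose $$\sum_{i:\,p_i>0}\frac{\gamma_i^4}{p_i^2}\le\frac{L}{n^2}.$$ Then for every $\rho\le\|\gamma\|_t$ we have $R^*_\rho\ge\eta$.
   Context: Binomial model: $N\ge2$, $n\ge2$ even. For $q\in[0,1]^N$ one observes $X_1,\dots,X_n$ i.i.d. in $\{0,1\}^N$ with mutually independent coordinates $X_l(j)\sim\mathrm{Ber}(q_j)$; $\mathbb P_q$ is their joint law. $\|x\|_t=(\sum_j|x_j|^t)^{1/t}$, $t\in[1,2]$. Known $p\in[0,1]^N$ with $\max_jp_j\le1/2$; $\eta\in(0,1)$. For a test $\psi:(\{0,1\}^N)^n\to\{0,1\}$, $R_\rho(\psi)=\mathbb P_p(\psi=1)+\sup_{q\in[0,1]^N:\|p-q\|_t\ge\rho}\mathbb P_q(\psi=0)$, and $R^*_\rho=\inf_\psi R_\rho(\psi)$. *)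

(* Defs.v *)
From HB Require Import structures.
From mathcomp Require Import all_boot all_order all_algebra.
From mathcomp Require Import all_classical all_reals all_analysis.
Set Implicit Arguments. Unset Strict Implicit. Unset Printing Implicit Defensive.
Import Order.TTheory GRing.Theory Num.Theory.
Local Open Scope ring_scope.
Local Open Scope classical_set_scope.

Section Binomial.
Variable R : realType.

(* A sample: n observations X_1..X_n, each in {0,1}^N (true = 1). *)
Definition sample (N n : nat) := {ffun 'I_n -> {ffun 'I_N -> bool}}.

Definition pmass (N n : nat) (q : 'I_N -> R) (x : sample N n) : R :=
  \prod_(l < n) \prod_(j < N) (if x l j then q j else 1 - q j).

Definition Prob (N n : nat) (q : 'I_N -> R) (A : pred (sample N n)) : R :=
  \sum_(x : sample N n | A x) pmass q x.

Definition lnorm (N : nat) (t : R) (x : 'I_N -> R) : R :=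
  (\sum_(j < N) `|x j| `^ t) `^ (t^-1).

Definition risk (N n : nat) (t : R) (p : 'I_N -> R) (rho : R)
    (psi : sample N n -> bool) : R :=
  Prob p (fun x => psi x) +
  sup [set Prob q (fun x => ~~ psi x) | q in
        [set q : 'I_N -> R | (forall j, 0 <= q j <= 1) /\
                             rho <= lnorm t (fun j => p j - q j)]].

Definition minimax_risk (N n : nat) (t : R) (p : 'I_N -> R) (rho : R) : R :=
  inf [set risk t p rho psi | psi in [set: sample N n -> bool]].

End Binomial.

(* Main.v *)
Require Import Defs.
From HB Require Import structures.
From mathcomp Require Import all_boot all_order all_algebra.
From mathcomp Require Import all_classical all_reals all_analysis.
From mathcomp Require Import ring lra.
Import Order.TTheory GRing.Theory Num.Theory.
Local Open Scope ring_scope.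

Lemma sum_ffun_prod (R : comNzRingType) (I J : finType) (F : I -> J -> R) :
  \sum_(f : {ffun I -> J}) \prod_i F i (f i) = \prod_i \sum_j F i j.
Proof. by rewrite bigA_distr_bigA. Qed.

Lemma sum_ffun_prod_bool (R : comNzRingType) (I : finType) (F : I -> bool -> R) :
  \sum_(f : {ffun I -> bool}) \prod_i F i (f i) = \prod_i (F i true + F i false).
Proof. by rewrite sum_ffun_prod; apply: eq_bigr => i _; rewrite big_bool. Qed.

Lemma sum_sample (R : comNzRingType) (N n : nat) (F : 'I_n -> 'I_N -> bool -> R) :
  \sum_(x : sample N n) \prod_l \prod_j F l j (x l j) =
  \prod_l \prod_j (F l j true + F l j false).
Proof.
rewrite /sample (@sum_ffun_prod _ _ _ (fun l (y : {ffun 'I_N -> bool}) => \prod_j F l j (y j))).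
by apply: eq_bigr => l _; rewrite sum_ffun_prod_bool.
Qed.

Lemma pmass_total (R : realType) (N n : nat) (q : 'I_N -> R) :
  \sum_(x : sample N n) pmass q x = 1.
Proof.
rewrite /pmass (@sum_sample _ _ _ (fun l j (b : bool) => if b then q j else 1 - q j)).
by rewrite big1 // => l _; rewrite big1 // => j _; rewrite subrKC.
Qed.

Lemma pmass_ge0 (R : realType) (N n : nat) (q : 'I_N -> R) x :
  (forall j, 0 <= q j <= 1) -> 0 <= @pmass R N n q x.
Proof.
move=> hq; rewrite /pmass; apply: prodr_ge0 => l _; apply: prodr_ge0 => j _.
by case: (x l j); have := hq j; case/andP => ? ?; rewrite ?subr_ge0.
Qed.

Lemma chi_sum (R : realType) (N n : nat) (a b c : 'I_N -> R) :
  \sum_(x : sample N n) pmass a x * pmass b x / pmass c x =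
  \prod_(l < n) \prod_(j < N) (a j * b j / c j + (1 - a j) * (1 - b j) / (1 - c j)).
Proof.
rewrite -(@sum_sample _ _ _ (fun l j (s : bool) =>
   (if s then a j else 1 - a j) * (if s then b j else 1 - b j) / (if s then c j else 1 - c j))).
apply: eq_bigr => x _; rewrite /pmass -prodfV -!big_split /=.
by apply: eq_bigr => l _; rewrite -prodfV -!big_split.
Qed.

Definition sg (R : realType) (b : bool) : R := if b then 1 else -1.

Lemma coord_id (R : realType) (p g : R) (a b : bool) :
  0 <= g <= p -> p <= 1/2 ->
  (p + sg R a * g) * (p + sg R b * g) / p +
  (1 - (p + sg R a * g)) * (1 - (p + sg R b * g)) / (1 - p) =
  1 + sg R a * sg R b * (g ^+ 2 / (p * (1 - p))).
Proof.
move=> /andP[g0 gp] hp.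
have [p0|p0] := eqVneq p 0; first subst p.
  have -> : g = 0 by apply/eqP; rewrite eq_le gp g0.
  rewrite /sg; case: a; case: b; rewrite !(mulr0, addr0, mul0r, subr0, invr1, mulr1, expr0n, invr0, mulr0) /=. 1-4: lra.
have q0 : 1 - p != 0 by apply/eqP => h; lra.
by rewrite /sg; case: a; case: b; field; rewrite q0 p0.
Qed.

Definition qe (R : realType) (N : nat) (p g : 'I_N -> R) (e : {ffun 'I_N -> bool}) : 'I_N -> R :=
  fun j => p j + sg R (e j) * g j.
Arguments qe {R N}.
Definition Mx (R : realType) (N n : nat) (p g : 'I_N -> R) (x : sample N n) : R :=
  ((2:R)^-1)^+N * \sum_(e : {ffun 'I_N -> bool}) pmass (qe p g e) x.
Arguments Mx {R N n}.
Definition dl (R : realType) (N : nat) (p g : 'I_N -> R) (j : 'I_N) : R :=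
  g j ^+ 2 / (p j * (1 - p j)).

Arguments dl {R N}.
Lemma M2 (R : realType) (N n : nat) (p g : 'I_N -> R) :
  (forall j, 0 <= p j <= 1 / 2) -> (forall i, 0 <= g i <= p i) ->
  \sum_(x : sample N n) Mx p g x ^+ 2 / pmass p x =
  \prod_(j < N) (((1 + dl p g j) ^+ n + (1 - dl p g j) ^+ n) / 2).
Proof.
move=> hp hg.
set c := ((2:R)^-1)^+N.
have step1 : forall x : sample N n, Mx p g x ^+ 2 / pmass p x =
   c * c * \sum_(e : {ffun 'I_N -> bool}) \sum_(e' : {ffun 'I_N -> bool})
      pmass (qe p g e) x * pmass (qe p g e') x / pmass p x.
  move=> x; rewrite /Mx -/c expr2.
  have -> : forall a b d : R, a*b*(a*b)/d = a*a*(b*b/d) by move=> *; ring.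
  congr (_ * _).
  rewrite big_distrl big_distrl /=; apply: eq_bigr => e _.
  by rewrite big_distrr big_distrl /=; apply: eq_bigr => e' _.
rewrite (eq_bigr _ (fun x _ => step1 x)) -big_distrr /=.
rewrite exchange_big /=; under eq_bigr do rewrite exchange_big /=.
have hc : c * c = \prod_(j < N) (4:R)^-1.
  by rewrite prodr_const card_ord -exprMn; congr (_ ^+ _); field.
have hee : forall e e' : {ffun 'I_N -> bool},
   \sum_(x : sample N n) pmass (qe p g e) x * pmass (qe p g e') x / pmass p x =
   \prod_(j < N) (1 + sg R (e j) * sg R (e' j) * dl p g j) ^+ n.
  move=> e e'; rewrite chi_sum exchange_big /=; apply: eq_bigr => j _.
  rewrite (eq_bigr (fun _ : 'I_n => 1 + sg R (e j) * sg R (e' j) * dl p g j)).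
    by rewrite prodr_const card_ord.
  by move=> l _; rewrite /qe coord_id //; case/andP: (hp j).
under eq_bigr do under eq_bigr do rewrite hee.
rewrite hc big_distrr /=.
under eq_bigr => e _.
  rewrite big_distrr /=.
  under eq_bigr do rewrite -big_split /=.
  rewrite (@sum_ffun_prod_bool _ _ (fun j b => 4^-1 * (1 + sg R (e j) * sg R b * dl p g j) ^+ n)).
over.
rewrite (@sum_ffun_prod_bool _ _ (fun j a => 4^-1 * (1 + sg R a * sg R true * dl p g j) ^+ n +
   4^-1 * (1 + sg R a * sg R false * dl p g j) ^+ n)).
apply: eq_bigr => j _; rewrite /sg !(mulr1, mul1r, mulrN1, mulN1r, opprK).
by field.
Qed.

Lemma qe_range (R : realType) (N : nat) (p g : 'I_N -> R) e j :
  (forall j, 0 <= p j <= 1 / 2) -> (forall i, 0 <= g i <= p i) ->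
  0 <= qe p g e j <= 1.
Proof.
move=> hp hg; have := hp j; have := hg j; rewrite /qe /sg.
by case: (e j) => /andP[? ?] /andP[? ?]; apply/andP; split; lra.
Qed.

Lemma pmass0 (R : realType) (N n : nat) (p g : 'I_N -> R) e (x : sample N n) :
  (forall j, 0 <= p j <= 1 / 2) -> (forall i, 0 <= g i <= p i) ->
  pmass p x = 0 -> pmass (qe p g e) x = 0.
Proof.
move=> hp hg /eqP /prodf_eq0 [l _] /prodf_eq0 [j _] hz.
apply/eqP/prodf_eq0; exists l => //; apply/prodf_eq0; exists j => //.
move: hz; have := hp j; have := hg j; rewrite /qe /sg.
case: (x l j) => /andP[? ?] /andP[? ?] /eqP hz; last lra.
have -> : g j = 0 by lra.
by rewrite hz mulr0 addr0.
Qed.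

Lemma Mx0 (R : realType) (N n : nat) (p g : 'I_N -> R) (x : sample N n) :
  (forall j, 0 <= p j <= 1 / 2) -> (forall i, 0 <= g i <= p i) ->
  pmass p x = 0 -> Mx p g x = 0.
Proof.
move=> hp hg h0; rewrite /Mx big1 ?mulr0 // => e _; exact: pmass0.
Qed.

Lemma Mx_total (R : realType) (N n : nat) (p g : 'I_N -> R) :
  \sum_(x : sample N n) Mx p g x = 1.
Proof.
rewrite /Mx -big_distrr /= exchange_big /=.
under eq_bigr do rewrite pmass_total.
rewrite sumr_const card_ffun card_bool card_ord natrX -exprMn_comm.
  have -> : ((2:R)^-1 * 2%:R) = 1 by field. by rewrite expr1n.
exact: mulrC.
Qed.

Lemma Mx_ge0 (R : realType) (N n : nat) (p g : 'I_N -> R) (x : sample N n) :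
  (forall j, 0 <= p j <= 1 / 2) -> (forall i, 0 <= g i <= p i) ->
  0 <= Mx p g x.
Proof.
move=> hp hg; rewrite /Mx mulr_ge0 ?exprn_ge0 ?invr_ge0 ?ler0n //.
by apply: sumr_ge0 => e _; apply: pmass_ge0 => j; apply: qe_range.
Qed.

Lemma chi_eq (R : realType) (N n : nat) (p g : 'I_N -> R) :
  (forall j, 0 <= p j <= 1 / 2) -> (forall i, 0 <= g i <= p i) ->
  \sum_(x : sample N n) (pmass p x - Mx p g x) ^+ 2 / pmass p x =
  \sum_(x : sample N n) Mx p g x ^+ 2 / pmass p x - 1.
Proof.
move=> hp hg.
have -> : \sum_(x : sample N n) (pmass p x - Mx p g x) ^+ 2 / pmass p x =
  \sum_(x : sample N n) (pmass p x - 2 * Mx p g x + Mx p g x ^+ 2 / pmass p x).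
  apply: eq_bigr => x _.
  have [h0|h0] := eqVneq (pmass p x) 0.
    by rewrite (@Mx0 _ _ _ p g x hp hg h0) h0 !(invr0, mulr0, subr0, addr0).
  by field.
rewrite !big_split /= pmass_total sumrN -big_distrr /= Mx_total; lra.
Qed.
Lemma prod_bound (R : realType) (I : Type) (r : seq I) (a : I -> R) :
  (forall i, 0 <= a i) -> \sum_(i <- r) a i <= 1/2 ->
  \prod_(i <- r) (1 + a i) <= 1 + 2 * \sum_(i <- r) a i.
Proof.
move=> a0; elim: r => [|i r IH]; first by rewrite !big_nil; lra.
rewrite !big_cons => hs.
have s0 : 0 <= \sum_(j <- r) a j by rewrite sumr_ge0.
have := a0 i => ai.
have := IH ltac:(lra) => IH'.
apply: le_trans (_ : (1 + a i) * (1 + 2 * \sum_(j <- r) a j) <= _).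
  by rewrite ler_wpM2l //; lra.
nra.
Qed.
Lemma fgbound (R : realType) (n : nat) (d : R) : 0 <= d -> (n%:R * d)^+2 <= 1/2 ->
  forall k, (k <= n)%N -> ((1+d)^+k + (1-d)^+k)/2 <= 1 + 2*(k%:R*d)^+2 /\
     ((1+d)^+k - (1-d)^+k)/2 <= 2*(k%:R*d).
Proof.
move=> d0 hn; elim=> [|k IH] hk.
  rewrite !expr0 mul0r; split; lra.
have [IHf IHg] := IH (ltnW hk).
have hkd : (k%:R * d)^+2 <= 1/2.
  apply: le_trans hn; rewrite ler_sqr ?nnegrE ?mulr_ge0 ?ler0n //.
  by rewrite ler_wpM2r // ler_nat ltnW.
set A := (1+d)^+k in IHf IHg *; set B := (1-d)^+k in IHf IHg *.
set u := k%:R * d in IHf IHg hkd *.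
have -> : k.+1%:R * d = u + d by rewrite /u -addn1 natrD mulrDl mul1r.
rewrite !exprS -/A -/B.
have u0 : 0 <= u by rewrite mulr_ge0 ?ler0n.
split; nra.
Qed.

Lemma dl_ge0 (R : realType) (N : nat) (p g : 'I_N -> R) j :
  (forall j, 0 <= p j <= 1 / 2) -> 0 <= dl p g j.
Proof.
move=> hp; have := hp j => /andP[? ?].
by rewrite /dl divr_ge0 ?sqr_ge0 // mulr_ge0 //; lra.
Qed.

Lemma dl_sq (R : realType) (N : nat) (p g : 'I_N -> R) j :
  (forall j, 0 <= p j <= 1 / 2) -> (forall i, 0 <= g i <= p i) ->
  dl p g j ^+ 2 <= 4 * (if 0 < p j then g j ^+ 4 / p j ^+ 2 else 0).
Proof.
move=> hp hg; have := hp j => /andP[p0 p1]; have := hg j => /andP[g0 g1].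
case: ltP => hpj; last first.
  rewrite /dl; have -> : p j = 0 by lra.
  by rewrite mul0r invr0 mulr0 expr0n mulr0.
set a := g j ^+ 2 / p j.
have a0 : 0 <= a by rewrite /a divr_ge0 ?sqr_ge0 ?ltW.
have ha : dl p g j = a / (1 - p j) by rewrite /dl /a invfM mulrA.
have hb : dl p g j <= 2 * a.
  rewrite ha ler_pdivrMr; last lra.
  nra.
have -> : g j ^+ 4 / p j ^+ 2 = a ^+ 2 by rewrite /a expr_div_n -exprM.
have d0 : 0 <= dl p g j by apply: dl_ge0.
have h := ler_pM d0 d0 hb hb.
by rewrite !expr2; lra.
Qed.

Lemma prod_f_bound (R : realType) (N n : nat) (p g : 'I_N -> R) (L : R) :
  (forall j, 0 <= p j <= 1 / 2) -> (forall i, 0 <= g i <= p i) ->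
  (1 <= n)%N -> 0 <= L <= 1/16 ->
  \sum_(i < N | 0 < p i) g i ^+ 4 / p i ^+ 2 <= L / (n%:R ^+ 2) ->
  \prod_(j < N) (((1 + dl p g j) ^+ n + (1 - dl p g j) ^+ n) / 2) <= 1 + 16 * L.
Proof.
move=> hp hg hn /andP[L0 L1] hs.
have n0 : (0 : R) < n%:R by rewrite ltr0n.
set b := fun j => 2 * (n%:R * dl p g j) ^+ 2.
have hsum : \sum_(j < N) (n%:R * dl p g j) ^+ 2 <= 4 * L.
  have e1 : \sum_(j < N) (n%:R * dl p g j) ^+ 2 = n%:R ^+ 2 * \sum_(j < N) dl p g j ^+ 2.
    by rewrite big_distrr /=; apply: eq_bigr => j _; rewrite exprMn.
  have e2 : \sum_(j < N) dl p g j ^+ 2 <= 4 * (L / n%:R ^+ 2).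
    have e3 : \sum_(j < N) dl p g j ^+ 2 <= 4 * \sum_(i < N | 0 < p i) g i ^+ 4 / p i ^+ 2.
      rewrite big_distrr /= [X in _ <= X]big_mkcond /=; apply: ler_sum => j _; have := @dl_sq R N p g j hp hg; by case: ifP; rewrite ?mulr0.
    by apply: le_trans e3 _; rewrite ler_wpM2l.
  rewrite e1; have := ler_wpM2l (ltW (exprn_gt0 2 n0)) e2.
  move=> h; apply: le_trans h _.
  have nz : (n%:R:R) ^+ 2 != 0 by rewrite expf_neq0 // gt_eqF.
  have -> : (n%:R:R) ^+ 2 * (4 * (L / n%:R ^+ 2)) = 4 * L by field; rewrite gt_eqF.
  done.
have hj : forall j, (n%:R * dl p g j) ^+ 2 <= 1/4.
  move=> j; apply: (@le_trans _ _ (4 * L)); last lra.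
  apply: le_trans hsum; rewrite (bigD1 j) //= lerDl; apply: sumr_ge0 => *; exact: sqr_ge0.
have hf : forall j, 0 <= ((1 + dl p g j) ^+ n + (1 - dl p g j) ^+ n) / 2 <= 1 + b j.
  move=> j; have d0 := @dl_ge0 R N p g j hp.
  have dle : dl p g j <= 1.
    have := hj j; have : 1 <= n%:R :> R by rewrite ler1n.
    move=> h1 h2; have h3 : dl p g j <= n%:R * dl p g j by rewrite ler_peMl.
    move: h2 h3; set u := n%:R * dl p g j; rewrite expr2 => h2 h3; nra.
  apply/andP; split.
    by rewrite divr_ge0 // addr_ge0 // exprn_ge0 //; lra.
  have q : (1/4:R) <= 1/2 by lra.
  have [h _] := @fgbound R n (dl p g j) d0 (le_trans (hj j) q) n (leqnn n).
  by rewrite /b.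
apply: (@le_trans _ _ (\prod_(j < N) (1 + b j))).
  by apply: ler_prod => j _; exact: hf.
have b0 : forall j, 0 <= b j by move=> j; rewrite /b mulr_ge0 ?sqr_ge0.
have hb : \sum_(j < N) b j <= 8 * L.
  by rewrite /b -big_distrr /=; lra.
have q2 : 8 * L <= 1/2 by lra.
have := @prod_bound R _ (index_enum (fintype_ordinal__canonical__fintype_Finite N)) b b0 (le_trans hb q2).
move=> h; apply: le_trans h _; lra.
Qed.

Lemma lnorm_qe (R : realType) (N : nat) (t : R) (p g : 'I_N -> R) e :
  (forall i, 0 <= g i) ->
  lnorm t (fun j => p j - qe p g e j) = lnorm t g.
Proof.
move=> hg; rewrite /lnorm; congr (_ `^ _); apply: eq_bigr => j _.
congr (_ `^ _); rewrite /qe opprD addrA subrr add0r normrN normrM.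
by rewrite /sg; case: (e j); rewrite ?normrN normr1 mul1r.
Qed.

Lemma L1_bound (R : realType) (N n : nat) (p g : 'I_N -> R) (lam : R) :
  (forall j, 0 <= p j <= 1 / 2) -> (forall i, 0 <= g i <= p i) -> 0 < lam ->
  \sum_(x : sample N n) (pmass p x - Mx p g x) ^+ 2 / pmass p x <= lam ^+ 2 ->
  \sum_(x : sample N n) `|pmass p x - Mx p g x| <= lam.
Proof.
move=> hp hg l0 hchi.
have pt : forall x : sample N n, 2 * `|pmass p x - Mx p g x| <=
    lam * pmass p x + lam^-1 * ((pmass p x - Mx p g x) ^+ 2 / pmass p x).
  move=> x.
  have P0 : 0 <= pmass p x by apply: pmass_ge0 => j; have := hp j; case/andP=> ? ?; apply/andP; split; lra.
  have [h0|h0] := eqVneq (pmass p x) 0.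
    by rewrite (@Mx0 _ _ _ p g x hp hg h0) h0 subrr normr0 !(mulr0, invr0, addr0).
  have a0 : 0 < lam * pmass p x by rewrite mulr_gt0 // lt_def h0.
  set d := pmass p x - Mx p g x.
  have -> : lam^-1 * (d ^+ 2 / pmass p x) = `|d| ^+ 2 / (lam * pmass p x).
    by rewrite (real_normK (num_real d)) invfM; field; rewrite h0 gt_eqF.
  set a := lam * pmass p x.
  have : 0 <= (a - `|d|) ^+ 2 / a by rewrite divr_ge0 ?sqr_ge0 ?ltW.
  have -> : (a - `|d|) ^+ 2 / a = a + `|d| ^+ 2 / a - 2 * `|d|.
    by field; rewrite gt_eqF.
  by rewrite subr_ge0.
have : \sum_(x : sample N n) 2 * `|pmass p x - Mx p g x| <= \sum_(x : sample N n)
    (lam * pmass p x + lam^-1 * ((pmass p x - Mx p g x) ^+ 2 / pmass p x)).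
  by apply: ler_sum => x _; exact: pt.
rewrite -big_distrr big_split /= -big_distrr -big_distrr /= pmass_total mulr1.
move=> h.
have h2 : lam^-1 * \sum_(x : sample N n) (pmass p x - Mx p g x) ^+ 2 / pmass p x <= lam.
  rewrite ler_pdivrMl // expr2 in hchi *.
lra.
Qed.

Lemma Prob_le1 (R : realType) (N n : nat) (q : 'I_N -> R) (B : pred (sample N n)) :
  (forall j, 0 <= q j <= 1) -> Prob q B <= 1.
Proof.
move=> hq; rewrite /Prob -(@pmass_total R N n q) [X in _ <= X](bigID B) /= lerDl.
by apply: sumr_ge0 => x _; apply: pmass_ge0.
Qed.

Local Open Scope classical_set_scope.
Lemma risk_bound (R : realType) (eta : R) (N n : nat) (t : R) (p g : 'I_N -> R) (rho : R)
  (psi : sample N n -> bool) :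
  (forall j, 0 <= p j <= 1 / 2) -> (forall i, 0 <= g i <= p i) ->
  rho <= lnorm t g ->
  \sum_(x : sample N n) `|pmass p x - Mx p g x| <= 1 - eta ->
  eta <= risk t p rho psi.
Proof.
move=> hp hg hrho hL1.
set S := [set Prob q (fun x => ~~ psi x) | q in
        [set q : 'I_N -> R | (forall j, 0 <= q j <= 1) /\
                             rho <= lnorm t (fun j => p j - q j)]].
have hub : has_ubound S.
  exists (1:R); rewrite /S => _ [q [hq _] <-]; exact: Prob_le1.
have hS : forall e, Prob (qe p g e) (fun x => ~~ psi x) <= sup S.
  move=> e; apply: (ub_le_sup hub); exists (qe p g e) => //; split.
    by move=> j; apply: qe_range.
  by rewrite lnorm_qe // => i; case/andP: (hg i).
have hM : \sum_(x : sample N n | ~~ psi x) Mx p g x <= sup S.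
  rewrite /Mx -big_distrr /= exchange_big /=.
  apply: (@le_trans _ _ (((2:R)^-1)^+N * \sum_(e : {ffun 'I_N -> bool}) sup S)).
    rewrite ler_wpM2l ?exprn_ge0 ?invr_ge0 ?ler0n //.
    by apply: ler_sum => e _; exact: hS.
  have e2 : ((2:R)^-1)^+N * (2 ^ N)%:R = 1.
    rewrite natrX -exprMn_comm; last exact: mulrC.
    have -> : ((2:R)^-1 * 2%:R) = 1 by field.
    by rewrite expr1n.
  by rewrite sumr_const card_ffun card_bool card_ord -[sup S *+ _]mulr_natr mulrCA e2 mulr1.
rewrite /risk -/S.
apply: (@le_trans _ _ (Prob p (fun x => psi x) + \sum_(x : sample N n | ~~ psi x) Mx p g x)); last first.
  by rewrite lerD2l.
have tot := @pmass_total R N n p; rewrite (bigID (fun x => psi x)) /= in tot.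
rewrite /Prob.
have : \sum_(x : sample N n | ~~ psi x) (pmass p x - Mx p g x) <= 1 - eta.
  apply: le_trans hL1.
  apply: (@le_trans _ _ (\sum_(x : sample N n | ~~ psi x) `|pmass p x - Mx p g x|)).
    by apply: ler_sum => x _; exact: ler_norm.
  rewrite [X in _ <= X](bigID (fun x => psi x)) /= lerDr.
  by apply: sumr_ge0 => *.
rewrite sumrB; lra.
Qed.

Local Close Scope classical_set_scope.

Theorem lemmaA2 (R : realType) (eta : R) (heta : 0 < eta < 1) :
  exists L : R, 0 < L /\
  forall (N n : nat) (t : R) (p gamma : 'I_N -> R) (rho : R),
    (2 <= N)%N -> (2 <= n)%N -> ~~ odd n ->
    1 <= t <= 2 ->
    (forall j, 0 <= p j <= 1 / 2) ->
    (forall i, 0 <= gamma i <= p i) ->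
    \sum_(i < N | 0 < p i) gamma i ^+ 4 / p i ^+ 2 <= L / (n%:R ^+ 2) ->
    rho <= lnorm t gamma ->
    eta <= minimax_risk n t p rho.
Proof.
case/andP: heta => e0 e1.
have l0 : 0 < 1 - eta by lra.
exists ((1 - eta) ^+ 2 / 16); split.
  by rewrite divr_gt0 // exprn_gt0.
move=> N n t p g rho hN hn _ _ hp hg hs hrho.
have hLb : 0 <= (1 - eta) ^+ 2 / 16 <= 1/16.
  apply/andP; split; first by rewrite divr_ge0 // sqr_ge0.
  rewrite ler_pM2r ?invr_gt0 //.
  by rewrite expr2; nra.
have hL1 : \sum_(x : sample N n) `|pmass p x - Mx p g x| <= 1 - eta.
  apply: L1_bound => //; rewrite chi_eq // M2 //.
  have := @prod_f_bound R N n p g _ hp hg (ltnW hn) hLb hs.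
  have -> : 16 * ((1 - eta) ^+ 2 / 16) = (1 - eta) ^+ 2 by field.
  lra.
rewrite /minimax_risk; apply: lb_le_inf.
  by exists (risk t p rho (fun _ : sample N n => true)); exists (fun _ : sample N n => true).
by move=> _ [psi _ <-]; exact: risk_bound.
Qed.
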